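(* For every two-player stage game $G$: if $G\in\mathcal{G}_{LS}^{p,p}$ then $G\in\mathcal{G}_{LS}^{m,m}$; that is, $\mathcal{G}_{LS}^{p,p}\subseteq\mathcal{G}_{LS}^{m,m}$.
   Context: A two-player stage game $G$ has finite nonempty action sets $A_1,A_2$ and payoffs $u_1,u_2:A_1\times A_2\to\mathbb{R}$, extended to mixed strategies by expectation. $G(T)$ is the $T$-round repetition with realized actions observed each round and payoffs the expected sum of stage payoffs; an SPE of $G(T)$ is a strategy profile whose continuation after every history of length $k<T$ is a Nash equilibrium of $G(T-k)$. Regimes: pure-pure ($p,p$): both players restricted to actions (in the stage game and in every round, including deviations); mixed-pure ($m,p$): player 1 may mix, player 2 uses only actions; mixed-mixed ($m,m$): both may mix. For regime $r$, $\mathrm{Nash}^r(G)$ is the set of stage-game profiles available in $r$ from which no player can profitably deviate unilaterally to a strategy available in $r$. Locally suboptimal behavior occurs in an SPE $\mu$ of $G(T)$ (regime $r$) if for some history $h$ of length $k<T$, $(\mu_1(h),\mu_2(h))\notin\mathrm{Nash}^r(G)$. $\mathcal{G}_{LS}^r$ is the set of stage games $G$ for which there exist $T\ge1$ and an SPE of $G(T)$ in regime $r$ in which locally suboptimal behavior occurs. *)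

(* Defs.v *)
From mathcomp Require Import all_boot all_order all_algebra.
From mathcomp Require Import reals.
Set Implicit Arguments. Unset Strict Implicit. Unset Printing Implicit Defensive.
Import Order.TTheory GRing.Theory Num.Theory.
Local Open Scope ring_scope.

Inductive regime := PP | MP | MM.

Definition mixes1 (r : regime) : bool := if r is PP then false else true.
Definition mixes2 (r : regime) : bool := if r is MM then true else false.

(* A stage strategy of a player with action set A is a function A -> R giving
   the probability of each action. *)
Definition is_dist {R : realType} {A : finType} (p : A -> R) : Prop :=
  (forall a, 0 <= p a) /\ \sum_(a : A) p a = 1.

Definition dirac {R : realType} {A : finType} (a : A) : A -> R :=
  fun b => (b == a)%:R.

Definition avail {R : realType} {A : finType} (mix : bool) (p : A -> R) : Prop :=
  if mix then is_dist p else exists a : A, forall b, p b = dirac a b.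

Definition stage_pay {R : realType} {A1 A2 : finType} (u : A1 -> A2 -> R)
  (p1 : A1 -> R) (p2 : A2 -> R) : R :=
  \sum_(a1 : A1) \sum_(a2 : A2) p1 a1 * p2 a2 * u a1 a2.

Definition stage_Nash {R : realType} {A1 A2 : finType} (r : regime)
  (u1 u2 : A1 -> A2 -> R) (p1 : A1 -> R) (p2 : A2 -> R) : Prop :=
  avail (mixes1 r) p1 /\ avail (mixes2 r) p2 /\
  (forall q1 : A1 -> R, avail (mixes1 r) q1 ->
      stage_pay u1 q1 p2 <= stage_pay u1 p1 p2) /\
  (forall q2 : A2 -> R, avail (mixes2 r) q2 ->
      stage_pay u2 p1 q2 <= stage_pay u2 p1 p2).

Definition history (A1 A2 : finType) := seq (A1 * A2)%type.

Definition strat {R : realType} (A1 A2 A : finType) := history A1 A2 -> A -> R.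

Definition strat_avail {R : realType} {A1 A2 A : finType} (mix : bool)
  (s : @strat R A1 A2 A) : Prop :=
  forall h, avail mix (s h).

Fixpoint value {R : realType} {A1 A2 : finType} (u : A1 -> A2 -> R)
  (s1 : @strat R A1 A2 A1) (s2 : @strat R A1 A2 A2) (n : nat) (h : history A1 A2)
  : R :=
  if n is n'.+1 then
    \sum_(a1 : A1) \sum_(a2 : A2)
      s1 h a1 * s2 h a2 * (u a1 a2 + value u s1 s2 n' (rcons h (a1, a2)))
  else 0.

Definition rep_pay {R : realType} {A1 A2 : finType} (u : A1 -> A2 -> R)
  (s1 : @strat R A1 A2 A1) (s2 : @strat R A1 A2 A2) (n : nat) : R :=
  value u s1 s2 n [::].

Definition rep_Nash {R : realType} {A1 A2 : finType} (r : regime)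
  (u1 u2 : A1 -> A2 -> R) (n : nat)
  (s1 : @strat R A1 A2 A1) (s2 : @strat R A1 A2 A2) : Prop :=
  strat_avail (mixes1 r) s1 /\ strat_avail (mixes2 r) s2 /\
  (forall t1 : @strat R A1 A2 A1, strat_avail (mixes1 r) t1 ->
      rep_pay u1 t1 s2 n <= rep_pay u1 s1 s2 n) /\
  (forall t2 : @strat R A1 A2 A2, strat_avail (mixes2 r) t2 ->
      rep_pay u2 s1 t2 n <= rep_pay u2 s1 s2 n).

Definition cont {R : realType} {A1 A2 A : finType} (s : @strat R A1 A2 A)
  (h : history A1 A2) : @strat R A1 A2 A :=
  fun h' => s (h ++ h').

Definition SPE {R : realType} {A1 A2 : finType} (r : regime)
  (u1 u2 : A1 -> A2 -> R) (T : nat)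
  (s1 : @strat R A1 A2 A1) (s2 : @strat R A1 A2 A2) : Prop :=
  strat_avail (mixes1 r) s1 /\ strat_avail (mixes2 r) s2 /\
  forall h : history A1 A2, (size h < T)%N ->
    rep_Nash r u1 u2 (T - size h) (cont s1 h) (cont s2 h).

Definition locally_suboptimal {R : realType} {A1 A2 : finType} (r : regime)
  (u1 u2 : A1 -> A2 -> R) (T : nat)
  (s1 : @strat R A1 A2 A1) (s2 : @strat R A1 A2 A2) : Prop :=
  exists h : history A1 A2, (size h < T)%N /\ ~ stage_Nash r u1 u2 (s1 h) (s2 h).

Definition in_G_LS {R : realType} {A1 A2 : finType} (r : regime)
  (u1 u2 : A1 -> A2 -> R) : Prop :=
  exists T : nat, (1 <= T)%N /\
    exists (s1 : @strat R A1 A2 A1) (s2 : @strat R A1 A2 A2),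
      SPE r u1 u2 T s1 s2 /\ locally_suboptimal r u1 u2 T s1 s2.

(* Main.v *)
Require Import Defs.
From mathcomp Require Import all_boot all_order all_algebra.
From mathcomp Require Import reals.
From Stdlib Require Import ClassicalEpsilon.
Set Implicit Arguments. Unset Strict Implicit. Unset Printing Implicit Defensive.
Import Order.TTheory GRing.Theory Num.Theory.
Local Open Scope ring_scope.

Section Aux.
Variables (R : realType) (A1 A2 : finType).

Lemma sum_dirac (A : finType) (a : A) (f : A -> R) :
  \sum_(b : A) dirac a b * f b = f a.
Proof.
rewrite (bigD1 a) //= big1 => [|b /negbTE nb]; first by rewrite /dirac eqxx mul1r addr0.
by rewrite /dirac nb mul0r.
Qed.

Lemma dirac_dist (A : finType) (a : A) : is_dist (dirac a : A -> R).
Proof.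
split; first by move=> b; rewrite /dirac ler0n.
have := sum_dirac a (fun _ => 1); under eq_bigr do rewrite mulr1; by [].
Qed.

Lemma pure_dist (A : finType) (p : A -> R) : avail false p -> is_dist p.
Proof.
move=> [a Ha]; have [H1 H2] := dirac_dist a; split.
  by move=> b; rewrite Ha.
by rewrite -H2; apply: eq_bigr => b _; rewrite Ha.
Qed.

Lemma pure_nonneg (A : finType) (p : A -> R) : avail false p -> forall a, 0 <= p a.
Proof. by move/pure_dist => []. Qed.

Lemma exists_max (A : finType) (a0 : A) (W : A -> R) :
  exists a, forall b, W b <= W a.
Proof.
suff [a Ha] : exists a, forall b, b \in enum A -> W b <= W a.
  by exists a => b; apply: Ha; rewrite mem_enum.
elim: (enum A) => [|x s [a Ha]]; first by exists a0.
have [le|le] := leP (W x) (W a).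
  exists a => b; rewrite inE => /orP [/eqP ->|]; [exact: le | exact: Ha].
exists x => b; rewrite inE => /orP [/eqP ->//|/Ha h]; exact: le_trans h (ltW le).
Qed.

Lemma value_shift u (s1 : @strat R A1 A2 A1) s2 n h h' :
  value u s1 s2 n (h ++ h') = value u (cont s1 h) (cont s2 h) n h'.
Proof.
elim: n h' => [//|n IH] h' /=.
apply: eq_bigr => a1 _; apply: eq_bigr => a2 _.
by rewrite rcons_cat IH.
Qed.

Lemma value_shift1 u (s1 : @strat R A1 A2 A1) s2 n x :
  value u s1 s2 n [:: x] = value u (cont s1 [:: x]) (cont s2 [:: x]) n [::].
Proof. by rewrite -value_shift cats0. Qed.

Lemma mix_le (A : finType) (d : A -> R) (W : A -> R) a :
  is_dist d -> (forall b, W b <= W a) -> \sum_b d b * W b <= W a.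
Proof.
move=> [d0 d1] Hm.
apply: le_trans (_ : \sum_b d b * W a <= _).
  by apply: ler_sum => b _; apply: ler_wpM2l.
by rewrite -big_distrl /= d1 mul1r.
Qed.

Lemma best_pure1 (a0 : A1) u n : forall (s2 : @strat R A1 A2 A2) (t1 : @strat R A1 A2 A1),
  (forall h a, 0 <= s2 h a) -> strat_avail true t1 ->
  exists p, strat_avail false p /\ value u t1 s2 n [::] <= value u p s2 n [::].
Proof.
elim: n => [|n IH] s2 t1 Hs2 Ht1.
  by exists (fun _ => dirac a0); split => // h; exists a0.
have H x : exists p, strat_avail false p /\
   value u (cont t1 [:: x]) (cont s2 [:: x]) n [::] <= value u p (cont s2 [:: x]) n [::].
  apply: IH; first by move=> h a; apply: Hs2.
  by move=> h; apply: Ht1.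
pose px x := proj1_sig (constructive_indefinite_description _ (H x)).
have Hpx x : strat_avail false (px x) /\
   value u (cont t1 [:: x]) (cont s2 [:: x]) n [::] <= value u (px x) (cont s2 [:: x]) n [::].
  exact: proj2_sig (constructive_indefinite_description _ (H x)).
pose W a1 := \sum_a2 s2 [::] a2 * (u a1 a2 + value u (px (a1, a2)) (cont s2 [:: (a1, a2)]) n [::]).
have [am Ham] := exists_max a0 W.
pose P (h : history A1 A2) := if h is x :: h' then px x h' else dirac am.
exists P; split.
  by case=> [|x h] /=; [exists am | apply: (Hpx x).1].
have E (d : A1 -> R) (s1 : @strat R A1 A2 A1) : \sum_a1 \sum_a2 d a1 * s2 [::] a2 *
   (u a1 a2 + value u s1 s2 n (rcons [::] (a1, a2))) =
   \sum_a1 d a1 * \sum_a2 s2 [::] a2 * (u a1 a2 + value u s1 s2 n [:: (a1, a2)]).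
  by apply: eq_bigr => a1 _; rewrite big_distrr; apply: eq_bigr => a2 _; rewrite -mulrA.
have -> : value u P s2 n.+1 [::] = W am.
  rewrite /= E /= sum_dirac /W; apply: eq_bigr => a2 _.
  by rewrite value_shift1.
rewrite /= E.
have HH := mix_le (Ht1 [::]) Ham. apply: le_trans HH.
apply: ler_sum => a1 _; apply: ler_wpM2l; first by case: (Ht1 [::]).
apply: ler_sum => a2 _; apply: ler_wpM2l => //.
by rewrite lerD2l value_shift1; apply: (Hpx _).2.
Qed.

Lemma best_pure2 (a0 : A2) u n : forall (s1 : @strat R A1 A2 A1) (t2 : @strat R A1 A2 A2),
  (forall h a, 0 <= s1 h a) -> strat_avail true t2 ->
  exists p, strat_avail false p /\ value u s1 t2 n [::] <= value u s1 p n [::].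
Proof.
elim: n => [|n IH] s1 t2 Hs1 Ht2.
  by exists (fun _ => dirac a0); split => // h; exists a0.
have H x : exists p, strat_avail false p /\
   value u (cont s1 [:: x]) (cont t2 [:: x]) n [::] <= value u (cont s1 [:: x]) p n [::].
  apply: IH; first by move=> h a; apply: Hs1.
  by move=> h; apply: Ht2.
pose px x := proj1_sig (constructive_indefinite_description _ (H x)).
have Hpx x : strat_avail false (px x) /\
   value u (cont s1 [:: x]) (cont t2 [:: x]) n [::] <= value u (cont s1 [:: x]) (px x) n [::].
  exact: proj2_sig (constructive_indefinite_description _ (H x)).
pose W a2 := \sum_a1 s1 [::] a1 * (u a1 a2 + value u (cont s1 [:: (a1, a2)]) (px (a1, a2)) n [::]).
have [am Ham] := exists_max a0 W.
pose P (h : history A1 A2) := if h is x :: h' then px x h' else dirac am.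
exists P; split.
  by case=> [|x h] /=; [exists am | apply: (Hpx x).1].
have E (d : A2 -> R) (s2 : @strat R A1 A2 A2) : \sum_a1 \sum_a2 s1 [::] a1 * d a2 *
   (u a1 a2 + value u s1 s2 n (rcons [::] (a1, a2))) =
   \sum_a2 d a2 * \sum_a1 s1 [::] a1 * (u a1 a2 + value u s1 s2 n [:: (a1, a2)]).
  rewrite exchange_big; apply: eq_bigr => a2 _; rewrite big_distrr.
  by apply: eq_bigr => a1 _ /=; rewrite mulrCA mulrA.
have -> : value u s1 P n.+1 [::] = W am.
  rewrite /= E /= sum_dirac /W; apply: eq_bigr => a1 _.
  by rewrite value_shift1.
rewrite /= E.
have HH := mix_le (Ht2 [::]) Ham. apply: le_trans HH.
apply: ler_sum => a2 _; apply: ler_wpM2l; first by case: (Ht2 [::]).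
apply: ler_sum => a1 _; apply: ler_wpM2l => //.
by rewrite lerD2l value_shift1; apply: (Hpx _).2.
Qed.

End Aux.

Theorem mainTheorem16 (R : realType) (A1 A2 : finType)
  (hA1 : (0 < #|A1|)%N) (hA2 : (0 < #|A2|)%N) (u1 u2 : A1 -> A2 -> R) :
  in_G_LS PP u1 u2 -> in_G_LS MM u1 u2.
Proof.
have [a1 _] := card_gt0P hA1; have [a2 _] := card_gt0P hA2.
move=> [T [HT [s1 [s2 [[Hs1 [Hs2 HN]] [h [Hh HL]]]]]]].
exists T; split => //; exists s1, s2; split.
  split; first by move=> h'; apply: pure_dist.
  split; first by move=> h'; apply: pure_dist.
  move=> h' Hh'; have [_ [_ [N1 N2]]] := HN h' Hh'.
  split; first by move=> h''; apply: pure_dist; apply: Hs1.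
  split; first by move=> h''; apply: pure_dist; apply: Hs2.
  split.
    move=> t1 Ht1.
    have [p [Hp Hle]] := best_pure1 a1 u1 (T - size h') (s2:=cont s2 h')
      (fun h a => pure_nonneg (Hs2 _) a) Ht1.
    exact: le_trans Hle (N1 p Hp).
  move=> t2 Ht2.
  have [p [Hp Hle]] := best_pure2 a2 u2 (T - size h') (s1:=cont s1 h')
    (fun h a => pure_nonneg (Hs1 _) a) Ht2.
  exact: le_trans Hle (N2 p Hp).
exists h; split => //; move=> [_ [_ [M1 M2]]]; apply: HL.
split; first exact: Hs1.
split; first exact: Hs2.
split.
  by move=> q1 Hq; apply: M1; apply: pure_dist.
by move=> q2 Hq; apply: M2; apply: pure_dist.
Qed.
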